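(* Let $k\ge 3$ be an integer and $F$ a field admitting a primitive $(k-1)$-th root of unity with $\mathrm{char}(F)\nmid k$. Let $X$ be a finite poset, $B$ a unital associative $F$-algebra, and $\varphi:I(X,F)\to B$ an $F$-linear map with $\varphi(P_k(I(X,F)))\subseteq P_k(B)$ and $1\in\varphi(I(X,F))$. Then there exist a Jordan homomorphism $\psi:I(X,F)\to B$ and an element $u\in B$ commuting with every element of $\varphi(I(X,F))$, with $u^{k-1}=1$, such that $\varphi=u\psi$.
   Context: $I(X,F)$ is the incidence algebra of the locally finite poset $X$ over $F$ (functions $f:X\times X\to F$ vanishing unless $x\le y$, with product $(fg)(x,y)=\sum_{x\le z\le y}f(x,z)g(z,y)$). $P_k(A)=\{a: a^k=a\}$. A Jordan homomorphism $\psi:A\to B$ of associative algebras is a linear map with $\psi(a^2)=\psi(a)^2$ and $\psi(aba)=\psi(a)\psi(b)\psi(a)$ for all $a,b$. *)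

(* Defs.v *)
From HB Require Import structures.
From mathcomp Require Import all_boot all_order all_algebra.
Set Implicit Arguments.
Unset Strict Implicit.
Unset Printing Implicit Defensive.
Import Order.TTheory GRing.Theory Num.Theory.
Local Open Scope ring_scope.

(* Incidence algebra I(X,F) of a finite poset X over a field F.
   Elements are represented as functions f : X * X -> F (finite functions)
   satisfying the support condition [is_incidence f]. *)
Section Incidence.
Variables (d : Order.disp_t) (X : finPOrderType d) (F : fieldType).

Local Notation incfun := {ffun X * X -> F}.

Definition is_incidence (f : incfun) : Prop :=
  forall x y : X, ~~ (x <= y)%O -> f (x, y) = 0.

Definition inc_mul (f g : incfun) : incfun :=
  [ffun p => \sum_(z : X | (p.1 <= z)%O && (z <= p.2)%O) f (p.1, z) * g (z, p.2)].

Definition inc_one : incfun := [ffun p => (p.1 == p.2)%:R].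

Definition inc_comb (c : F) (f g : incfun) : incfun := [ffun p => c * f p + g p].

Definition inc_exp (f : incfun) (n : nat) : incfun := iter n (inc_mul f) inc_one.

End Incidence.

Notation incfun X F := {ffun (X : finPOrderType _) * X -> (F : fieldType)}.

Definition inc_linear d (X : finPOrderType d) (F : fieldType) (B : algType F)
  (phi : incfun X F -> B) : Prop :=
  forall (c : F) (f g : incfun X F), is_incidence f -> is_incidence g ->
    phi (inc_comb c f g) = c *: phi f + phi g.

Definition inc_jordan_hom d (X : finPOrderType d) (F : fieldType) (B : algType F)
  (psi : incfun X F -> B) : Prop :=
  [/\ inc_linear psi,
      (forall a, is_incidence a -> psi (inc_mul a a) = psi a * psi a) &
      (forall a b, is_incidence a -> is_incidence b ->
         psi (inc_mul (inc_mul a b) a) = psi a * psi b * psi a)].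

(* Main.v *)
Require Import Defs.
From HB Require Import structures.
From mathcomp Require Import all_boot all_order all_algebra.
From mathcomp Require Import zify.
Import Order.TTheory GRing.Theory Num.Theory.
Local Open Scope ring_scope.
Set Implicit Arguments.
Unset Strict Implicit.
Unset Printing Implicit Defensive.

Section Alg.
Variables (F : fieldType) (B : algType F).
Implicit Types a b c : B.

Fixpoint cc a b n r : B :=
  match n with
  | 0 => (r == 0)%:R
  | n'.+1 => a * cc a b n' r + (if r is r'.+1 then b * cc a b n' r' else 0)
  end.

Lemma cc_big a b n r : (n < r)%N -> cc a b n r = 0.
Proof.
elim: n r => [|n IH] [|r] //= H.
by rewrite !IH // ?mulr0 ?addr0 // (ltn_trans _ H).
Qed.

Lemma cc_expand a b (mu : F) n :
  (a + mu *: b) ^+ n = \sum_(r < n.+1) mu ^+ r *: cc a b n r.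
Proof.
elim: n => [|n IH]; first by rewrite expr0 big_ord1 /= expr0 scale1r.
rewrite exprS IH mulrDl !mulr_sumr /=.
under [X in _ = X]eq_bigr => r _ do rewrite scalerDr.
rewrite big_split /= [X in _ = X + _]big_ord_recr /= cc_big // mulr0 scaler0 addr0.
rewrite [X in _ = _ + X]big_ord_recl /= scaler0 add0r; congr (_ + _).
  by apply: eq_bigr => r _; rewrite scalerAr.
apply: eq_bigr => r _; rewrite /bump /= add1n exprS -scalerA -scalerAl.
by rewrite -scalerAr.
Qed.

Lemma cc0 a b n : cc a b n 0 = a ^+ n.
Proof. by elim: n => [|n IH] /=; rewrite ?expr0 // IH addr0 exprS. Qed.

Lemma cc1 a b n : cc a b n 1 = \sum_(j < n) a ^+ j * b * a ^+ (n.-1 - j).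
Proof.
elim: n => [|n IH]; first by rewrite big_ord0.
rewrite /= IH cc0 big_ord_recl /= expr0 mul1r subn0 addrC; congr (_ + _).
rewrite mulr_sumr; apply: eq_bigr => j _.
by rewrite /bump /= add1n exprS !mulrA; case: n j {IH} => [[]//|n] j.
Qed.

Lemma ccnn a b n : cc a b n n = b ^+ n.
Proof. by elim: n => [|n IH] /=; rewrite ?expr0 // cc_big // mulr0 add0r IH exprS. Qed.

Lemma corner a b m : (0 < m)%N -> (m.+1%:R : F) != 0 ->
  a ^+ m.+1 = a -> \sum_(j < m.+1) a ^+ j * b * a ^+ (m - j) = 0 ->
  a * b = 0 /\ b * a = 0.
Proof.
move=> m0 k0 ak S0.
set p := a ^+ m.
have ap : a * p = a by rewrite -exprS.
have pa : p * a = a by rewrite -exprSr.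
have pcomm j : p * a ^+ j = a ^+ j * p by rewrite -!exprD addnC.
have pj j : (0 < j)%N -> a ^+ j * p = a ^+ j.
  by case: j => // j _; rewrite exprSr -mulrA ap -exprSr.
have pp : p * p = p by rewrite {1}/p -(prednK m0) exprSr -mulrA ap -exprSr prednK.
set c := p * b * p.
(* p S = S - b p + c *)
have H1 : b * p = c.
  have : p * (\sum_(j < m.+1) a ^+ j * b * a ^+ (m - j)) = 0 by rewrite S0 mulr0.
  rewrite big_ord_recl /= subn0 expr0 mul1r mulrDr -/p.
  move: S0; rewrite big_ord_recl /= subn0 expr0 mul1r -/p => S0.
  have -> : p * (\sum_(i < m) a ^+ bump 0 i * b * a ^+ (m - bump 0 i)) =
            \sum_(i < m) a ^+ bump 0 i * b * a ^+ (m - bump 0 i).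
    rewrite mulr_sumr; apply: eq_bigr => i _; rewrite !mulrA pcomm pj //.
  move=> H; apply/eqP; rewrite -subr_eq0; apply/eqP.
  have : b * p + \sum_(i < m) a ^+ bump 0 i * b * a ^+ (m - bump 0 i) - (p * (b * p) + \sum_(i < m) a ^+ bump 0 i * b * a ^+ (m - bump 0 i)) = 0 by rewrite S0 H subrr.
  by rewrite opprD addrACA subrr addr0 /c mulrA.
have H2 : p * b = c.
  have : (\sum_(j < m.+1) a ^+ j * b * a ^+ (m - j)) * p = 0 by rewrite S0 mul0r.
  rewrite big_ord_recr /= subnn expr0 mulr1 mulrDl -/p.
  move: S0; rewrite big_ord_recr /= subnn expr0 mulr1 -/p => S0.
  have -> : (\sum_(i < m) a ^+ i * b * a ^+ (m - i)) * p =
            \sum_(i < m) a ^+ i * b * a ^+ (m - i).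
    rewrite mulr_suml; apply: eq_bigr => i _; rewrite -mulrA.
    by rewrite pj ?subn_gt0.
  move=> H; apply/eqP; rewrite -subr_eq0; apply/eqP.
  have : (\sum_(i < m) a ^+ i * b * a ^+ (m - i)) + p * b - ((\sum_(i < m) a ^+ i * b * a ^+ (m - i)) + p * b * p) = 0 by rewrite S0 H subrr.
  by rewrite opprD addrACA subrr add0r.
have S' : \sum_(j < m.+1) a ^+ j * c * a ^+ (m - j) = 0.
  have : p * (\sum_(j < m.+1) a ^+ j * b * a ^+ (m - j)) * p = 0 by rewrite S0 mulr0 mul0r.
  rewrite mulr_sumr mulr_suml => H; rewrite -[RHS]H; apply: eq_bigr => j _.
  by rewrite /c !mulrA pcomm -!mulrA -pcomm.
have pc : p * c = c by rewrite /c !mulrA pp.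
have cp : c * p = c by rewrite /c -!mulrA pp.
set T := \sum_(j < m) a ^+ j * c * a ^+ (m - j).
have TC : T = - c.
  move: S'; rewrite big_ord_recr /= subnn expr0 mulr1 -/p pc -/T.
  by move/eqP; rewrite addr_eq0 => /eqP.
have aT : a * T = T * a.
  apply/eqP; rewrite -subr_eq0; apply/eqP.
  pose g j := a ^+ j * c * a ^+ (m.+1 - j).
  have -> : a * T = \sum_(0 <= j < m) g j.+1.
    rewrite big_mkord mulr_sumr; apply: eq_bigr => j _.
    by rewrite /g subSS !mulrA -exprS.
  have -> : T * a = \sum_(0 <= j < m) g j.
    rewrite big_mkord mulr_suml; apply: eq_bigr => j _.
    by rewrite /g -mulrA -exprSr subSn // ltnW.
  rewrite -sumrB telescope_sumr // /g subn0 expr0 mul1r subSn // subnn expr1.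
  by rewrite -/p pc ak subrr.
have ac : a * c = c * a.
  by move: aT; rewrite TC mulrN mulNr => /oppr_inj.
have acj j : a ^+ j * c = c * a ^+ j by rewrite (commrX j (esym ac)).
have kc : c *+ m.+1 = 0.
  rewrite -S' (eq_bigr (fun=> c)) ?sumr_const ?card_ord // => j _.
  by rewrite acj -mulrA -exprD subnKC ?cp // -ltnS.
have c0 : c = 0.
  move: kc; rewrite -scaler_nat => /eqP; rewrite scaler_eq0 (negbTE k0) /=.
  by move/eqP.
split.
  by rewrite -ap -mulrA H2 c0 mulr0.
by rewrite -pa mulrA H1 c0 mul0r.
Qed.

Lemma rootsum (w : F) m : m.-primitive_root w -> forall s,
  \sum_(i < m) w ^+ (s * i) = if (m %| s)%N then m%:R else 0.
Proof.
move=> Hw s; under eq_bigr => i _ do rewrite exprM.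
case: ifP => Hd.
  move: Hd; rewrite (prim_order_dvd Hw) => /eqP ->.
  by rewrite (eq_bigr (fun=> 1)) ?sumr_const ?card_ord // => i _; rewrite expr1n.
move: Hd; rewrite (prim_order_dvd Hw) => /negbT Hx.
have : (w ^+ s) ^+ m - 1 = 0 by rewrite -exprM mulnC exprM (prim_expr_order Hw) expr1n subrr.
rewrite subrX1 => /eqP; rewrite mulf_eq0 subr_eq0 (negbTE Hx) /=.
by move/eqP.
Qed.

Lemma extract (w : F) m a b : (1 < m)%N -> m.-primitive_root w ->
  (forall i, (a + w ^+ i *: b) ^+ m.+1 = a + w ^+ i *: b) ->
  b ^+ m.+1 = b -> cc a b m.+1 1 = 0.
Proof.
move=> m1 Hw H Hb.
have h1 : (0 < m.-1)%N by rewrite -ltnS prednK // ltnW.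
have h2 : (m.-1 < m)%N by rewrite ltn_predL ltnW.
have h3 : (2 <= m.+1)%N by rewrite ltnS ltnW.
have R : \sum_(i < m) w ^+ (m.-1 * i) *: (a + w ^+ i *: b) = m%:R *: b.
  rewrite (eq_bigr (fun i : 'I_m => w ^+ (m.-1 * i) *: a + w ^+ (m * i) *: b)); last first.
    move=> i _; rewrite scalerDr scalerA -exprD; congr (_ + (w ^+ _ *: _)).
    by rewrite addnC -mulSn prednK // ltnW.
  rewrite big_split /= -!scaler_suml !(rootsum Hw).
  by rewrite dvdnn (gtnNdvd h1 h2) scale0r add0r.
have key : \sum_(i < m) w ^+ (m.-1 * i) *: ((a + w ^+ i *: b) ^+ m.+1) =
           \sum_(i < m) w ^+ (m.-1 * i) *: (a + w ^+ i *: b).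
  by apply: eq_bigr => i _; rewrite H.
have L : \sum_(i < m) w ^+ (m.-1 * i) *: ((a + w ^+ i *: b) ^+ m.+1) =
   \sum_(r < m.+2) (if (m %| m.-1 + r)%N then m%:R else 0) *: cc a b m.+1 r.
  under eq_bigr => i _ do rewrite cc_expand scaler_sumr.
  rewrite exchange_big /=; apply: eq_bigr => r _; rewrite -(rootsum Hw) scaler_suml.
  apply: eq_bigr => i _.
  by rewrite scalerA -exprM -exprD mulnDl [(i * r)%N]mulnC.
move: key; rewrite L R.
rewrite -(big_mkord xpredT (fun r => (if (m %| m.-1 + r)%N then m%:R else 0) *: cc a b m.+1 r)).
rewrite (big_ltn (ltn0Sn _)) (big_ltn (isT : (1 < m.+2)%N)) (@big_nat_recr _ _ _ m.+1 2 _ h3).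
rewrite big1_seq; last first.
  move=> r /andP[_]; rewrite mem_iota => /andP[r2 rm].
  have r1 : (0 < r.-1)%N by lia.
  have r3 : (r.-1 < m)%N by lia.
  have -> : (m.-1 + r = r.-1 + m)%N by lia.
  by rewrite dvdn_addl // (gtnNdvd r1 r3) scale0r.
have -> : (m.-1 + 0 = m.-1)%N by lia.
have -> : (m.-1 + 1 = m)%N by lia.
have -> : (m.-1 + m.+1 = m + m)%N by lia.
rewrite (gtnNdvd h1 h2) scale0r add0r dvdnn dvdn_addl // dvdnn.
rewrite ccnn Hb [X in _ + X]/= add0r.
move/eqP; rewrite -subr_eq0 addrK => /eqP /eqP; rewrite scaler_eq0.
by rewrite (negbTE (prim_root_natf_neq0 Hw)) /= => /eqP.
Qed.
End Alg.
Section Inc.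
Variables (d : Order.disp_t) (X : finPOrderType d) (F : fieldType).
Local Notation T := {ffun X * X -> F}.

Definition sc (c : F) (f : T) : T := [ffun p => c * f p].
Definition mm (f g : T) : T := [ffun p => \sum_z f (p.1, z) * g (z, p.2)].
Definition E (x y : X) : T := [ffun p => ((p.1 == x) && (p.2 == y))%:R].
Local Notation inc := (@is_incidence d X F).
Local Notation one := (@inc_one d X F).

Lemma inc_mulE f g : inc f -> inc g -> inc_mul f g = mm f g.
Proof.
move=> Hf Hg; apply/ffunP => p; rewrite !ffunE big_mkcond /=.
apply: eq_bigr => z _; case: ifP => // /negbT; rewrite negb_and => /orP[] H.
  by rewrite Hf // mul0r.
by rewrite Hg // mulr0.
Qed.

Lemma inc0 : inc 0. Proof. by move=> x y _; rewrite ffunE. Qed.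
Lemma incD f g : inc f -> inc g -> inc (f + g).
Proof. by move=> Hf Hg x y H; rewrite ffunE Hf // Hg // addr0. Qed.
Lemma incN f : inc f -> inc (- f).
Proof. by move=> Hf x y H; rewrite ffunE Hf // oppr0. Qed.
Lemma incB f g : inc f -> inc g -> inc (f - g).
Proof. by move=> Hf Hg; apply: incD => //; apply: incN. Qed.
Lemma incZ c f : inc f -> inc (sc c f).
Proof. by move=> Hf x y H; rewrite ffunE Hf // mulr0. Qed.
Lemma incE x y : (x <= y)%O -> inc (E x y).
Proof.
move=> Hxy a b H; rewrite ffunE /=; case: eqP => [ea|] //; case: eqP => [eb|] //.
by subst; rewrite Hxy in H.
Qed.
Lemma inc1 : inc one.
Proof. move=> a b H; rewrite ffunE /=; case: eqP => // e; by subst; rewrite lexx in H. Qed.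
Lemma incM f g : inc f -> inc g -> inc (mm f g).
Proof.
move=> Hf Hg a b H; rewrite ffunE /=; apply: big1 => z _.
case Haz: (a <= z)%O; last by rewrite Hf ?Haz // mul0r.
case Hzb: (z <= b)%O; last by rewrite Hg ?Hzb // mulr0.
by rewrite (le_trans Haz Hzb) in H.
Qed.
Lemma incS (I : finType) (P : pred I) (g : I -> T) :
  (forall i, P i -> inc (g i)) -> inc (\sum_(i | P i) g i).
Proof.
move=> H; apply: (big_ind inc) => //; [exact: inc0 | exact: incD].
Qed.

Lemma mmDl f g h : mm (f + g) h = mm f h + mm g h.
Proof. by apply/ffunP => p; rewrite !ffunE -big_split; apply: eq_bigr => z _; rewrite ffunE mulrDl. Qed.
Lemma mmDr f g h : mm h (f + g) = mm h f + mm h g.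
Proof. by apply/ffunP => p; rewrite !ffunE -big_split; apply: eq_bigr => z _; rewrite ffunE mulrDr. Qed.
Lemma mmNl f g : mm (- f) g = - mm f g.
Proof. by apply/ffunP => p; rewrite !ffunE -sumrN; apply: eq_bigr => z _; rewrite ffunE mulNr. Qed.
Lemma mmNr f g : mm g (- f) = - mm g f.
Proof. by apply/ffunP => p; rewrite !ffunE -sumrN; apply: eq_bigr => z _; rewrite ffunE mulrN. Qed.
Lemma mmBl f g h : mm (f - g) h = mm f h - mm g h.
Proof. by rewrite mmDl mmNl. Qed.
Lemma mmBr f g h : mm h (f - g) = mm h f - mm h g.
Proof. by rewrite mmDr mmNr. Qed.
Lemma mm0l f : mm 0 f = 0.
Proof. by apply/ffunP => p; rewrite !ffunE big1 // => z _; rewrite ffunE mul0r. Qed.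
Lemma mm0r f : mm f 0 = 0.
Proof. by apply/ffunP => p; rewrite !ffunE big1 // => z _; rewrite ffunE mulr0. Qed.
Lemma mmZl c f g : mm (sc c f) g = sc c (mm f g).
Proof. by apply/ffunP => p; rewrite !ffunE mulr_sumr; apply: eq_bigr => z _; rewrite ffunE mulrA. Qed.
Lemma mmZr c f g : mm f (sc c g) = sc c (mm f g).
Proof.
apply/ffunP => p; rewrite !ffunE mulr_sumr; apply: eq_bigr => z _.
by rewrite ffunE mulrCA.
Qed.
Lemma mmA f g h : mm (mm f g) h = mm f (mm g h).
Proof.
apply/ffunP => p; rewrite !ffunE /=.
under eq_bigr => z _ do rewrite ffunE /= mulr_suml.
rewrite exchange_big /=; apply: eq_bigr => w _; rewrite ffunE /= mulr_sumr.
by apply: eq_bigr => z _; rewrite mulrA.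
Qed.
Lemma mm1l f : inc f -> mm one f = f.
Proof.
move=> Hf; apply/ffunP => p; rewrite ffunE (bigD1 p.1) //= big1 ?addr0.
  by rewrite !ffunE /= eqxx mul1r -surjective_pairing.
by move=> z /negbTE nz; rewrite ffunE /= eq_sym nz mul0r.
Qed.
Lemma mm1r f : inc f -> mm f one = f.
Proof.
move=> Hf; apply/ffunP => p; rewrite ffunE (bigD1 p.2) //= big1 ?addr0.
  by rewrite !ffunE /= eqxx mulr1 -surjective_pairing.
by move=> z /negbTE nz; rewrite ffunE /= nz mulr0.
Qed.
Lemma mmE a b c e : mm (E a b) (E c e) = if b == c then E a e else 0.
Proof.
apply/ffunP => p; rewrite ffunE (bigD1 b) //= big1 ?addr0.
  rewrite !ffunE /= eqxx andbT; case: (eqVneq b c) => [bc|nbc] /=; first subst c.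
    by rewrite ffunE; case: (p.1 == a); case: (p.2 == e); rewrite ?mulr0 ?mul0r ?mul1r.
  by rewrite ffunE mulr0.
by move=> z /negbTE nz; rewrite ffunE /= nz andbF mul0r.
Qed.

Lemma sc1 f : sc 1 f = f. Proof. by apply/ffunP => p; rewrite ffunE mul1r. Qed.
Lemma sc0 c : sc c 0 = 0. Proof. by apply/ffunP => p; rewrite !ffunE mulr0. Qed.
Lemma scA a b f : sc a (sc b f) = sc (a * b) f.
Proof. by apply/ffunP => p; rewrite !ffunE mulrA. Qed.
Lemma scDr c f g : sc c (f + g) = sc c f + sc c g.
Proof. by apply/ffunP => p; rewrite !ffunE mulrDr. Qed.
Lemma scNr c f : sc c (- f) = - sc c f.
Proof. by apply/ffunP => p; rewrite !ffunE mulrN. Qed.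
Lemma comb_eq c f g : inc_comb c f g = sc c f + g.
Proof. by apply/ffunP => p; rewrite !ffunE. Qed.

Lemma mm_suml (I : finType) (P : pred I) (g : I -> T) h :
  mm (\sum_(i | P i) g i) h = \sum_(i | P i) mm (g i) h.
Proof. by rewrite (big_morph (fun f => mm f h) (fun f g => mmDl f g h) (mm0l h)). Qed.
Lemma mm_sumr (I : finType) (P : pred I) (g : I -> T) h :
  mm h (\sum_(i | P i) g i) = \sum_(i | P i) mm h (g i).
Proof. by rewrite (big_morph (fun f => mm h f) (fun f g => mmDr f g h) (mm0r h)). Qed.

Lemma dec f : inc f -> f = \sum_(p | (p.1 <= p.2)%O) sc (f p) (E p.1 p.2).
Proof.
move=> Hf; apply/ffunP => q; rewrite sum_ffunE.
case Hq: (q.1 <= q.2)%O.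
  rewrite (bigD1 q) //= big1 ?addr0.
    by rewrite !ffunE !eqxx mulr1.
  move=> p /andP[_ npq]; rewrite !ffunE.
  case: (eqVneq q.1 p.1) => e1; case: (eqVneq q.2 p.2) => e2 /=; rewrite ?mulr0 //.
  by case/eqP: npq; case: p q e1 e2 {Hq} => ? ? [? ?] /= -> ->.
have -> : f q = 0 by case: q Hq => x y /= Hq; rewrite Hf ?Hq.
rewrite big1 // => p Hp; rewrite !ffunE.
case: (eqVneq q.1 p.1) => e1; case: (eqVneq q.2 p.2) => e2 /=; rewrite ?mulr0 //.
by rewrite e1 e2 Hp in Hq.
Qed.

Section Phi.
Variables (B : algType F) (phi : T -> B).
Hypothesis Hlin : inc_linear phi.

Lemma phi0 : phi 0 = 0.
Proof.
have := Hlin 1 inc0 inc0; rewrite comb_eq sc1 addr0 scale1r.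
by move/(congr1 (fun y => y - phi 0)); rewrite subrr addrK.
Qed.
Lemma phiD f g : inc f -> inc g -> phi (f + g) = phi f + phi g.
Proof. by move=> Hf Hg; have := Hlin 1 Hf Hg; rewrite comb_eq sc1 scale1r. Qed.
Lemma phiZ c f : inc f -> phi (sc c f) = c *: phi f.
Proof. by move=> Hf; have := Hlin c Hf inc0; rewrite comb_eq addr0 (phi0) addr0. Qed.
Lemma phiN f : inc f -> phi (- f) = - phi f.
Proof.
move=> Hf; have -> : - f = sc (-1) f by apply/ffunP => p; rewrite !ffunE mulN1r.
by rewrite phiZ // scaleN1r.
Qed.
Lemma phiB f g : inc f -> inc g -> phi (f - g) = phi f - phi g.
Proof. by move=> Hf Hg; rewrite phiD ?phiN //; apply: incN. Qed.

Lemma phi_sum (I : finType) (P : pred I) (c : I -> F) (g : I -> T) :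
  (forall i, P i -> inc (g i)) ->
  phi (\sum_(i | P i) sc (c i) (g i)) = \sum_(i | P i) c i *: phi (g i).
Proof.
move=> Hg.
pose K x y := inc x /\ phi x = y.
have : K (\sum_(i | P i) sc (c i) (g i)) (\sum_(i | P i) c i *: phi (g i)).
  apply: (big_rec2 K); first by split; [exact: inc0 | exact: phi0].
  move=> i x y Pi [Hx <-]; split; first by apply: incD => //; apply: incZ; apply: Hg.
  by rewrite phiD ?phiZ //; [apply: Hg | apply: incZ; apply: Hg].
by case.
Qed.

Definition L (f : T) : B := \sum_(p | (p.1 <= p.2)%O) f p *: phi (E p.1 p.2).

Lemma L_phi f : inc f -> L f = phi f.
Proof. by move=> Hf; rewrite [in RHS](dec Hf) phi_sum // => p Hp; apply: incE. Qed.
Lemma LD f g : L (f + g) = L f + L g.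
Proof. by rewrite /L -big_split; apply: eq_bigr => p _; rewrite ffunE scalerDl. Qed.
Lemma LZ c f : L (sc c f) = c *: L f.
Proof. by rewrite /L scaler_sumr; apply: eq_bigr => p _; rewrite ffunE scalerA. Qed.
Lemma L0 : L 0 = 0.
Proof. by rewrite /L big1 // => p _; rewrite ffunE scale0r. Qed.
Lemma LN f : L (- f) = - L f.
Proof. by rewrite /L -sumrN; apply: eq_bigr => p _; rewrite ffunE scaleNr. Qed.
Lemma LB f g : L (f - g) = L f - L g.
Proof. by rewrite LD LN. Qed.
Lemma L_sum (I : finType) (P : pred I) (g : I -> T) :
  L (\sum_(i | P i) g i) = \sum_(i | P i) L (g i).
Proof. by rewrite (big_morph L LD L0). Qed.

Lemma aux_sq (E' Y : B) : E' * E' = E' -> (E' + Y) * (E' + Y) = E' + Y ->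
  (E' - Y) * (E' - Y) = E' - Y ->
  (E' * Y + Y * E') *+ 2 = Y *+ 2 /\ (Y * Y) *+ 2 = 0.
Proof.
move=> EE H1 H2.
have h1 : (E' * Y + Y * E') + Y * Y = Y.
  by move: H1; rewrite mulrDl !mulrDr EE -!addrA => /addrI; rewrite addrA.
have h2 : - (E' * Y + Y * E') + Y * Y = - Y.
  move: H2; rewrite mulrDl !mulrDr !mulrN !mulNr opprK EE -!addrA => /addrI.
  by rewrite opprD addrA.
set J := E' * Y + Y * E' in h1 h2 *; set Q := Y * Y in h1 h2 *.
split.
  have -> : J *+ 2 = (J + Q) - (- J + Q) by rewrite opprD opprK addrACA subrr addr0 mulr2n.
  by rewrite h1 h2 opprK mulr2n.
have -> : Q *+ 2 = (J + Q) + (- J + Q) by rewrite addrACA subrr add0r mulr2n.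
by rewrite h1 h2 subrr.
Qed.

Lemma aux_orth (E' G : B) : E' * E' = E' -> G * G = G ->
  (E' + G) * (E' + G) = E' + G -> E' * G + G * E' = 0.
Proof.
move=> EE GG; rewrite mulrDl !mulrDr EE GG (addrC (G * E')) addrACA.
by rewrite -[X in _ = X]addr0 => /addrI.
Qed.

Variables (m : nat) (w : F).
Hypotheses (m1 : (1 < m)%N) (Hw : m.-primitive_root w)
  (Hk : forall f, inc f -> inc_exp f m.+1 = f -> phi f ^+ m.+1 = phi f)
  (k0 : (m.+1)%:R != 0 :> F).

Local Notation u := (phi one).

Lemma exp_idem e n : inc e -> mm e e = e -> inc_exp e n.+1 = e.
Proof.
move=> He ee; elim: n => [|n IH].
  by change (inc_mul e one = e); rewrite (inc_mulE He (@inc1)) mm1r.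
change (inc_mul e (inc_exp e n.+1) = e); rewrite IH inc_mulE //.
Qed.

Lemma orth_facts e : inc e -> mm e e = e ->
  [/\ mm e (one - e) = 0, mm (one - e) e = 0 & mm (one - e) (one - e) = one - e].
Proof.
move=> He ee; have Hf : inc (one - e) by apply: incB => //; apply: inc1.
have a1 : mm e (one - e) = 0 by rewrite mmBr mm1r // ee subrr.
have a2 : mm (one - e) e = 0 by rewrite mmBl mm1l // ee subrr.
by split => //; rewrite mmBr a2 subr0 mm1r.
Qed.

Lemma exp_orth e (mu : F) n : inc e -> mm e e = e ->
  inc_exp (e + sc mu (one - e)) n = e + sc (mu ^+ n) (one - e).
Proof.
move=> He ee; have Hf : inc (one - e) by apply: incB => //; apply: inc1.
have [a1 a2 a3] := orth_facts He ee.
elim: n => [|n IH]; first by rewrite /inc_exp /= expr0 sc1 [e + _]addrC subrK.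
change (inc_mul (e + sc mu (one - e)) (inc_exp (e + sc mu (one - e)) n) =
        e + sc (mu ^+ n.+1) (one - e)).
rewrite IH inc_mulE; last 2 first.
- by apply: incD => //; apply: incZ.
- by apply: incD => //; apply: incZ.
rewrite !mmDl !mmDr !mmZl !mmZr ee a1 a2 a3 !sc0 scA exprS.
by rewrite addr0 add0r.
Qed.

Lemma idem_basic e : inc e -> mm e e = e ->
  [/\ phi e ^+ m.+1 = phi e, phi e * u = phi e * phi e & u * phi e = phi e * phi e].
Proof.
move=> He ee.
have Hf : inc (one - e) by apply: incB => //; apply: inc1.
have [a1 a2 a3] := orth_facts He ee.
have ak : phi e ^+ m.+1 = phi e by apply: Hk => //; apply: exp_idem.
have bk : phi (one - e) ^+ m.+1 = phi (one - e) by apply: Hk => //; apply: exp_idem.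
have Hi i : (phi e + w ^+ i *: phi (one - e)) ^+ m.+1 = phi e + w ^+ i *: phi (one - e).
  have Hg : inc (e + sc (w ^+ i) (one - e)) by apply: incD => //; apply: incZ.
  rewrite -phiZ // -phiD //; last by apply: incZ.
  apply: Hk => //; rewrite exp_orth //.
  by rewrite exprS exprAC (prim_expr_order Hw) expr1n mulr1.
have c0 := extract m1 Hw Hi bk.
rewrite cc1 /= in c0.
have [ab ba] := corner (ltnW m1) k0 ak c0.
move: ab ba; rewrite (phiB (@inc1) He) mulrBr mulrBl => /eqP ab /eqP ba.
by split => //; apply/eqP; rewrite -subr_eq0.
Qed.

Definition good (v : B) := u * v = v * u /\ u ^+ m * v = v.

Lemma good_idem e : inc e -> mm e e = e -> good (phi e).
Proof.
move=> He ee; have [ak au ua] := idem_basic He ee.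
have uj j : u ^+ j * phi e = phi e ^+ j.+1.
  elim: j => [|j IH]; first by rewrite expr0 mul1r expr1.
  by rewrite exprSr -mulrA ua mulrA IH -exprSr.
by split; [rewrite ua au | rewrite uj ak].
Qed.

Lemma goodD v1 v2 : good v1 -> good v2 -> good (v1 + v2).
Proof.
move=> [h1 h2] [h3 h4]; split; first by rewrite mulrDr mulrDl h1 h3.
by rewrite mulrDr h2 h4.
Qed.
Lemma goodZ c v : good v -> good (c *: v).
Proof. by move=> [h1 h2]; split; [rewrite -scalerAr -scalerAl h1 | rewrite -scalerAr h2]. Qed.
Lemma goodB v1 v2 : good v1 -> good v2 -> good (v1 - v2).
Proof.
move=> g1 g2; apply: goodD => //; rewrite -scaleN1r; exact: goodZ.
Qed.
Lemma good0 : good 0.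
Proof. by split; rewrite ?mulr0 ?mul0r. Qed.

Lemma good_E x y : (x <= y)%O -> good (phi (E x y)).
Proof.
move=> xy; case: (eqVneq x y) => [<-|nxy].
  by apply: good_idem; [apply: incE (lexx x) | rewrite mmE eqxx].
have He : inc (E x x + E x y) by apply: incD; [apply: incE (lexx x) | apply: incE xy].
have -> : phi (E x y) = phi (E x x + E x y) - phi (E x x).
  by rewrite (phiD (incE (lexx x)) (incE xy)) [phi (E x x) + _]addrC addrK.
apply: goodB; apply: good_idem.
- exact: He.
- by rewrite !mmDl !mmDr !mmE !eqxx eq_sym (negbTE nxy) addr0 addr0.
- exact: incE (lexx x).
- by rewrite mmE eqxx.
Qed.

Lemma good_L f : good (L f).
Proof.
rewrite /L; apply: (big_ind good); [exact: good0 | exact: goodD |].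
by move=> p Hp; apply: goodZ; apply: good_E.
Qed.

Hypothesis (Hone : exists2 f, inc f & phi f = 1).

Lemma um : u ^+ m = 1.
Proof.
have [f Hf f1] := Hone; have [_ h] := good_L f.
by move: h; rewrite L_phi // f1 !mulr1.
Qed.

Definition psi (f : T) : B := u ^+ m.-1 * L f.

Lemma psi_phi f : inc f -> phi f = u * psi f.
Proof.
move=> Hf; rewrite /psi mulrA -exprS prednK ?(ltnW m1) //.
by have [_ ->] := good_L f; rewrite L_phi.
Qed.

Lemma psi_idem e : inc e -> mm e e = e -> psi e * psi e = psi e.
Proof.
move=> He ee; have [ak au ua] := idem_basic He ee.
have uj j : u ^+ j * phi e = phi e ^+ j.+1.
  elim: j => [|j IH]; first by rewrite expr0 mul1r expr1.
  by rewrite exprSr -mulrA ua mulrA IH -exprSr.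
rewrite /psi L_phi // uj prednK ?(ltnW m1) // -exprD.
have -> : (m + m = m.+1 + m.-1)%N by lia.
by rewrite exprD ak -exprS prednK ?(ltnW m1).
Qed.

Lemma psiD f g : psi (f + g) = psi f + psi g.
Proof. by rewrite /psi LD mulrDr. Qed.
Lemma psiZ c f : psi (sc c f) = c *: psi f.
Proof. by rewrite /psi LZ scalerAr. Qed.
Lemma psiN f : psi (- f) = - psi f.
Proof. by rewrite /psi LN mulrN. Qed.
Lemma psiB f g : psi (f - g) = psi f - psi g.
Proof. by rewrite psiD psiN. Qed.
Lemma psi0 : psi 0 = 0.
Proof. by rewrite /psi L0 mulr0. Qed.
Lemma psi_sum (I : finType) (P : pred I) (g : I -> T) :
  psi (\sum_(i | P i) g i) = \sum_(i | P i) psi (g i).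
Proof. by rewrite (big_morph psi psiD psi0). Qed.


Lemma two_neq0 : (2%:R : F) != 0.
Proof.
apply/negP => /eqP h2.
have c2 : (2 \in [pchar F])%N by apply/andP; split => //; rewrite h2.
have d1 := dvdn_pcharf c2 m.+1; have d2 := dvdn_pcharf c2 m.
rewrite (negbTE k0) in d1; rewrite (negbTE (prim_root_natf_neq0 Hw)) in d2.
by move: d1 d2; rewrite !dvdn2 oddS; case: (odd m).
Qed.

Lemma two_cancel (v : B) : v *+ 2 = 0 -> v = 0.
Proof.
by rewrite -scaler_nat => /eqP; rewrite scaler_eq0 (negbTE two_neq0) /= => /eqP.
Qed.

Definition jp f g := psi f * psi g + psi g * psi f.

Lemma jpC f g : jp f g = jp g f.
Proof. by rewrite /jp addrC. Qed.
Lemma jpDl f g h : jp (f + g) h = jp f h + jp g h.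
Proof. by rewrite /jp psiD mulrDl mulrDr addrACA. Qed.
Lemma jpDr f g h : jp h (f + g) = jp h f + jp h g.
Proof. by rewrite jpC jpDl !(jpC h). Qed.

Lemma Ja e x : inc e -> inc x -> mm e e = e -> mm e x + mm x e = x -> mm x x = 0 ->
  jp e x = psi x /\ psi x * psi x = 0.
Proof.
move=> He Hx ee ex xx.
have H1 : psi (e + x) * psi (e + x) = psi (e + x).
  apply: psi_idem; first by apply: incD.
  by rewrite !mmDl !mmDr ee xx addr0 -[_ + mm e x + _]addrA ex.
have H2 : psi (e - x) * psi (e - x) = psi (e - x).
  apply: psi_idem; first by apply: incB.
  rewrite !mmBl !mmBr ee xx subr0 -addrA -opprD.
  by rewrite ex.
rewrite psiD in H1; rewrite psiB in H2.
have [a1 a2] := aux_sq (psi_idem He ee) H1 H2.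
split; last by apply: two_cancel.
by apply/eqP; rewrite -subr_eq0; apply/eqP; apply: two_cancel; rewrite mulrnBl a1 subrr.
Qed.

Lemma Jb e f : inc e -> inc f -> mm e e = e -> mm f f = f -> mm e f = 0 -> mm f e = 0 ->
  jp e f = 0.
Proof.
move=> He Hf ee ff ef fe; apply: aux_orth; rewrite ?psi_idem //.
rewrite -psiD psi_idem //; first by apply: incD.
by rewrite !mmDl !mmDr ee ff ef fe addr0 add0r.
Qed.

Lemma Qsq x y : (x <= y)%O -> x != y ->
  [/\ psi (E x y) * psi (E x y) = 0, jp (E x x) (E x y) = psi (E x y)
    & jp (E y y) (E x y) = psi (E x y)].
Proof.
move=> xy nxy.
have Ix := incE (lexx x); have Iy := incE (lexx y); have Ixy := incE xy.
have nyx : (y == x) = false by rewrite eq_sym (negbTE nxy).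
have xx : mm (E x y) (E x y) = 0 by rewrite mmE nyx.
have [h1 h2] : jp (E x x) (E x y) = psi (E x y) /\ psi (E x y) * psi (E x y) = 0.
  by apply: Ja => //; rewrite !mmE ?eqxx ?nyx ?addr0.
have [h3 _] : jp (E y y) (E x y) = psi (E x y) /\ psi (E x y) * psi (E x y) = 0.
  by apply: Ja => //; rewrite !mmE ?eqxx ?nyx ?add0r.
by [].
Qed.

Lemma sq_sum f g : psi (f + g) * psi (f + g) =
  psi f * psi f + jp f g + psi g * psi g.
Proof. by rewrite psiD mulrDl !mulrDr /jp !addrA. Qed.

Lemma JD x y z : (x <= y)%O -> x != y ->
  jp (E z z) (E x y) = psi (mm (E z z) (E x y) + mm (E x y) (E z z)).
Proof.
move=> xy nxy; have [Q1 Q2 Q3] := Qsq xy nxy.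
have nyx : (y == x) = false by rewrite eq_sym (negbTE nxy).
case: (eqVneq z x) => [-> | nzx].
  by rewrite !mmE eqxx nyx addr0.
case: (eqVneq z y) => [-> | nzy].
  by rewrite !mmE eqxx nyx add0r.
have nxz : (x == z) = false by rewrite eq_sym (negbTE nzx).
have nyz : (y == z) = false by rewrite eq_sym (negbTE nzy).
rewrite !mmE (negbTE nzx) nyz addr0 psi0.
have Ix := incE (lexx x); have Iz := incE (lexx z); have Ixy := incE xy.
have [h1 _] : jp (E x x + E z z) (E x y) = psi (E x y) /\ psi (E x y) * psi (E x y) = 0.
  apply: Ja => //.
  - by apply: incD.
  - by rewrite !mmDl !mmDr !mmE !eqxx nxz (negbTE nzx) addr0 add0r.
  - by rewrite !mmDl !mmDr !mmE !eqxx (negbTE nzx) nyx nyz !addr0.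
  - by rewrite mmE nyx.
by move: h1; rewrite jpDl Q2 -[X in _ = X]addr0 => /addrI.
Qed.

Lemma JO x y z v : (x <= y)%O -> x != y -> (z <= v)%O -> z != v -> y != z -> v != x ->
  jp (E x y) (E z v) = psi (mm (E x y) (E z v) + mm (E z v) (E x y)).
Proof.
move=> xy nxy zv nzv nyz nvx.
have [Q1 _ _] := Qsq xy nxy; have [Q1' _ _] := Qsq zv nzv.
rewrite !mmE (negbTE nyz) (negbTE nvx) addr0 psi0.
have Ixy := incE xy; have Izv := incE zv; have Ix := incE (lexx x); have Iz := incE (lexx z).
have nyx : (y == x) = false by rewrite eq_sym (negbTE nxy).
have nvz : (v == z) = false by rewrite eq_sym (negbTE nzv).
have nzy : (z == y) = false by rewrite eq_sym (negbTE nyz).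
have nxv : (x == v) = false by rewrite eq_sym (negbTE nvx).
have IX : inc (E x y + E z v) by apply: incD.
suff h : psi (E x y + E z v) * psi (E x y + E z v) = 0.
  by move: h; rewrite sq_sum Q1 Q1' add0r addr0.
case: (eqVneq x z) => [exz | nxz].
  subst z; apply: (proj2 (@Ja (E x x) _ Ix IX _ _ _)).
  - by rewrite mmE eqxx.
  - by rewrite !mmDl !mmDr !mmE !eqxx ?nyx ?nvz ?(negbTE nvx) !addr0.
  - by rewrite !mmDl !mmDr !mmE ?nyx ?(negbTE nvx) ?nvz ?(negbTE nyz) !addr0.
have nzx : (z == x) = false by rewrite eq_sym (negbTE nxz).
have Ie : inc (E x x + E z z) by apply: incD.
apply: (proj2 (@Ja (E x x + E z z) _ Ie IX _ _ _)).
- by rewrite !mmDl !mmDr !mmE !eqxx (negbTE nxz) nzx addr0 add0r.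
- by rewrite !mmDl !mmDr !mmE !eqxx (negbTE nxz) nzx nyx (negbTE nyz) (negbTE nvx) nvz !addr0 add0r.
- by rewrite !mmDl !mmDr !mmE nyx (negbTE nvx) nvz (negbTE nyz) !addr0.
Qed.

Lemma JC x y v : (x <= y)%O -> x != y -> (y <= v)%O -> y != v -> x != v ->
  jp (E x y) (E y v) = psi (mm (E x y) (E y v) + mm (E y v) (E x y)).
Proof.
move=> xy nxy yv nyv nxv.
have xv : (x <= v)%O := le_trans xy yv.
have nyx : (y == x) = false by rewrite eq_sym (negbTE nxy).
have nvy : (v == y) = false by rewrite eq_sym (negbTE nyv).
have nvx : (v == x) = false by rewrite eq_sym (negbTE nxv).
rewrite !mmE eqxx nvx addr0.
have Ixy := incE xy; have Iyv := incE yv; have Ixv := incE xv; have Iy := incE (lexx y).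
have If : inc (E y y + E x y) by apply: incD.
have IX : inc (E y v + E x v) by apply: incD.
have [h _] := @Ja (E y y + E x y) (E y v + E x v) If IX
  ltac:(by rewrite !mmDl !mmDr !mmE !eqxx nyx !addr0)
  ltac:(by rewrite !mmDl !mmDr !mmE !eqxx nyx nvy nvx !addr0)
  ltac:(by rewrite !mmDl !mmDr !mmE nvy nvx !addr0).
have [_ _ Q3] := Qsq yv nyv.
have [_ Q2 _] := Qsq yv nyv.
have J1 : jp (E y y) (E x v) = 0.
  by rewrite (JD y xv nxv) !mmE nyx nvy addr0 psi0.
have J2 : jp (E x y) (E x v) = 0.
  by rewrite (JO xy nxy xv nxv (negbT nyx) (negbT nvx)) !mmE nyx nvx addr0 psi0.
move: h; rewrite !jpDl !jpDr Q2 J1 J2 !addr0 psiD.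
by move/addrI.
Qed.

Lemma Jbasis (p q : X * X) : (p.1 <= p.2)%O -> (q.1 <= q.2)%O ->
  jp (E p.1 p.2) (E q.1 q.2) =
  psi (mm (E p.1 p.2) (E q.1 q.2) + mm (E q.1 q.2) (E p.1 p.2)).
Proof.
case: p q => x y [z v] /= xy zv.
case: (eqVneq x y) => [exy|nxy]; case: (eqVneq z v) => [ezv|nzv].
- subst y v; case: (eqVneq x z) => [exz|nxz].
    subst z; have ee : mm (E x x) (E x x) = E x x by rewrite mmE eqxx.
    by rewrite ee /jp psi_idem ?psiD //; apply: incE.
  have nzx : (z == x) = false by rewrite eq_sym (negbTE nxz).
  rewrite !mmE (negbTE nxz) nzx addr0 psi0.
  by apply: Jb; rewrite ?mmE ?eqxx ?nzx ?(negbTE nxz) //; apply: incE.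
- by subst y; apply: JD.
- by subst v; rewrite jpC addrC; apply: JD.
- case: (eqVneq y z) => [eyz|nyz].
    subst z; apply: JC => //.
    by apply/eqP => exv; subst v; move/eqP: nxy; apply; apply: le_anti; rewrite xy zv.
  case: (eqVneq v x) => [evx|nvx].
    subst v; rewrite jpC addrC; apply: JC => //.
    by apply/eqP => ezy; subst z; move/eqP: nxy; apply; apply: le_anti; rewrite xy zv.
  by apply: JO.
Qed.

Lemma psi_sq a : inc a -> psi (mm a a) = psi a * psi a.
Proof.
move=> Ha; have da := dec Ha.
have pa : psi a = \sum_(p | (p.1 <= p.2)%O) a p *: psi (E p.1 p.2).
  by rewrite {1}da psi_sum; apply: eq_bigr => p _; rewrite psiZ.
have pmm : psi (mm a a) = \sum_(p | (p.1 <= p.2)%O) \sum_(q | (q.1 <= q.2)%O)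
      (a p * a q) *: psi (mm (E p.1 p.2) (E q.1 q.2)).
  rewrite {1 2}da mm_suml psi_sum; apply: eq_bigr => p _.
  rewrite mm_sumr psi_sum; apply: eq_bigr => q _.
  by rewrite mmZl mmZr scA psiZ mulrC.
have pp : psi a * psi a = \sum_(p | (p.1 <= p.2)%O) \sum_(q | (q.1 <= q.2)%O)
      (a p * a q) *: (psi (E p.1 p.2) * psi (E q.1 q.2)).
  rewrite pa mulr_suml; apply: eq_bigr => p _; rewrite mulr_sumr; apply: eq_bigr => q _.
  by rewrite -scalerAl -scalerAr scalerA.
pose M (p q : X * X) := psi (E p.1 p.2) * psi (E q.1 q.2) - psi (mm (E p.1 p.2) (E q.1 q.2)).
have HS : \sum_(p | (p.1 <= p.2)%O) \sum_(q | (q.1 <= q.2)%O) (a p * a q) *: M p q = 0.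
  apply: two_cancel; rewrite mulr2n.
  rewrite [X in _ + X]exchange_big /= -big_split /=; apply: big1 => p Pp.
  rewrite -big_split /=; apply: big1 => q Pq.
  rewrite [a q * a p]mulrC -scalerDr /M addrACA -opprD -psiD.
  by rewrite -[_ * _ + _ * _]/(jp _ _) Jbasis // subrr scaler0.
apply/eqP; rewrite pmm pp -subr_eq0 -sumrB; apply/eqP.
transitivity (- \sum_(p | (p.1 <= p.2)%O) \sum_(q | (q.1 <= q.2)%O) (a p * a q) *: M p q); last by rewrite HS oppr0.
rewrite -sumrN; apply: eq_bigr => p _.
rewrite -sumrB -sumrN; apply: eq_bigr => q _.
by rewrite /M scalerBr opprB.
Qed.

Lemma psi_jp a b : inc a -> inc b -> psi (mm a b + mm b a) = jp a b.
Proof.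
move=> Ha Hb; have h := psi_sq (incD Ha Hb).
rewrite sq_sum -!psi_sq // !mmDl !mmDr !psiD in h.
rewrite psiD; move: h; rewrite -!addrA => /addrI.
rewrite !addrA => /addIr ->.
by [].
Qed.

Lemma zl (V : zmodType) (P Q R : V) : P + Q + (Q + R) - (P + R) = Q *+ 2.
Proof. by rewrite [Q + R]addrC addrACA addrC addrK mulr2n. Qed.

Lemma psi_triple a b : inc a -> inc b -> psi (mm (mm a b) a) = psi a * psi b * psi a.
Proof.
move=> Ha Hb.
have HY : inc (mm a b + mm b a) by apply: incD; apply: incM.
have e1 := psi_jp Ha HY.
have e2 := psi_jp (incM Ha Ha) Hb.
have H : psi (mm (mm a b) a) *+ 2 = jp a (mm a b + mm b a) - jp (mm a a) b.
  rewrite -e1 -e2 mmDr mmDl -!mmA !psiD.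
  by rewrite zl.
apply/eqP; rewrite -subr_eq0; apply/eqP; apply: two_cancel.
rewrite mulrnBl H /jp psi_jp // psi_sq // /jp.
rewrite !mulrDr !mulrDl !mulrA.
by rewrite zl subrr.
Qed.

Lemma main_sec : exists (psi0 : T -> B) (u0 : B),
  [/\ inc_jordan_hom psi0,
      (forall f, inc f -> u0 * phi f = phi f * u0),
      u0 ^+ m = 1 &
      (forall f, inc f -> phi f = u0 * psi0 f)].
Proof.
exists psi, u; split.
- split.
  + by move=> c f g Hf Hg; rewrite comb_eq psiD psiZ.
  + by move=> a Ha; rewrite inc_mulE // psi_sq.
  + move=> a b Ha Hb; rewrite (inc_mulE Ha Hb) inc_mulE ?psi_triple //.
    exact: incM.
- by move=> f Hf; have [h _] := good_L f; rewrite -(L_phi Hf) h.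
- exact: um.
- exact: psi_phi.
Qed.
End Phi.
End Inc.

Theorem corollary7p4 (k : nat) (F : fieldType) (d : Order.disp_t)
    (X : finPOrderType d) (B : algType F) (phi : incfun X F -> B) :
  (3 <= k)%N ->
  (exists z : F, (k.-1).-primitive_root z) ->
  (forall p : nat, p \in [pchar F] -> ~~ (p %| k)%N) ->
  inc_linear phi ->
  (forall f : incfun X F, is_incidence f -> inc_exp f k = f ->
     phi f ^+ k = phi f) ->
  (exists2 f : incfun X F, is_incidence f & phi f = 1) ->
  exists (psi : incfun X F -> B) (u : B),
    [/\ inc_jordan_hom psi,
        (forall f : incfun X F, is_incidence f -> u * phi f = phi f * u),
        u ^+ k.-1 = 1 &
        (forall f : incfun X F, is_incidence f -> phi f = u * psi f)].
Proof.
case: k => [|m] // k3 [w Hw] Hch Hlin Hk Hone.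
have m1 : (1 < m)%N by rewrite -ltnS.
have k0 : (m.+1)%:R != 0 :> F.
  apply/negP => /eqP h0.
  have [p Hp] := natf0_pchar (ltn0Sn m) (introT eqP h0).
  by move: (Hch p Hp); rewrite (dvdn_pcharf Hp) h0 eqxx.
exact: (main_sec Hlin m1 Hw Hk k0 Hone).
Qed.
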